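(* For all integers $n,m\ge 1$, letting $K_{n,m}$ be the complete bipartite graph with parts of sizes $n$ and $m$: ${\rm I}_e(K_{n,m})=0$ if $n\ne m$, and ${\rm I}_e(K_{n,n})=n$.
   Context: All graphs are finite and simple. A graph is locally irregular if no two adjacent vertices have the same degree. An edge-irregulator of a graph $G$ is a set $S\subseteq E(G)$ such that $G-S$ is locally irregular; ${\rm I}_e(G)$ is the minimum cardinality of an edge-irregulator of $G$. *)

(* Defs.v *)
From mathcomp Require Import all_boot.
Set Implicit Arguments. Unset Strict Implicit. Unset Printing Implicit Defensive.

Section Graphs.
Variable V : finType.

Definition simple_graph (adj : rel V) : Prop :=
  (forall x y, adj x y = adj y x) /\ (forall x, ~~ adj x x).

Definition edges (adj : rel V) : {set {set V}} :=
  [set [set x; y] | x in V, y in V & adj x y].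

Definition del_edges (adj : rel V) (S : {set {set V}}) : rel V :=
  fun x y => adj x y && ([set x; y] \notin S).

Definition deg (adj : rel V) (x : V) : nat := #|[set y | adj x y]|.

Definition locally_irregular (adj : rel V) : Prop :=
  forall x y, adj x y -> deg adj x <> deg adj y.

Definition locally_irregularb (adj : rel V) : bool :=
  [forall x, forall y, adj x y ==> (deg adj x != deg adj y)].

Definition edge_irregulator (adj : rel V) (S : {set {set V}}) : Prop :=
  S \subset edges adj /\ locally_irregular (del_edges adj S).

(* I_e(G): minimum cardinality of an edge-irregulator (the full edge set
   is always one, so the default value #|edges adj| is never spurious). *)
Definition Ie (adj : rel V) : nat :=
  \big[minn/#|edges adj|]_(S in powerset (edges adj)
        | locally_irregularb (del_edges adj S)) #|S|.
End Graphs.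

Definition Kbip (n m : nat) : rel ('I_n + 'I_m) :=
  fun x y => match x, y with
             | inl _, inr _ | inr _, inl _ => true
             | _, _ => false
             end.
Arguments Kbip : clear implicits.

(* Main.v *)
Require Import Defs.
From mathcomp Require Import all_boot.
Set Implicit Arguments. Unset Strict Implicit. Unset Printing Implicit Defensive.

Lemma locP (V : finType) (adj : rel V) : reflect (locally_irregular adj) (locally_irregularb adj).
Proof.
apply: (iffP forallP) => [H x y Hxy | H x].
  by move: (H x) => /forallP /(_ y) /implyP /(_ Hxy) /eqP.
by apply/forallP => y; apply/implyP => Hxy; apply/eqP; apply: H.
Qed.

Section K.
Variables n m : nat.
Local Notation V := ('I_n + 'I_m)%type.

Lemma inl_inj' : injective (@inl 'I_n 'I_m). Proof. by move=> x y []. Qed.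
Lemma inr_inj' : injective (@inr 'I_n 'I_m). Proof. by move=> x y []. Qed.

Lemma card_inl : #|(@inl 'I_n 'I_m) @: [set: 'I_n]| = n.
Proof. by rewrite card_imset ?cardsT ?card_ord //; exact: inl_inj'. Qed.
Lemma card_inr : #|(@inr 'I_n 'I_m) @: [set: 'I_m]| = m.
Proof. by rewrite card_imset ?cardsT ?card_ord //; exact: inr_inj'. Qed.

Lemma inl_in_pair (a a' : 'I_n) (b : 'I_m) :
  (inl a \in [set (inl a' : V); inr b]) = (a == a').
Proof.
rewrite !inE; apply/orP/eqP => [[/eqP [] // | /eqP //] | ->]; by left.
Qed.
Lemma inr_in_pair (a : 'I_n) (b b' : 'I_m) :
  (inr b \in [set (inl a : V); inr b']) = (b == b').
Proof.
rewrite !inE; apply/orP/eqP => [[/eqP // | /eqP [] //] | ->]; by right.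
Qed.

Lemma locP0 (adj : rel V) : reflect (locally_irregular adj) (locally_irregularb adj).
Proof.
apply: (iffP forallP) => [H x y Hxy | H x].
  by move: (H x) => /forallP /(_ y) /implyP /(_ Hxy) /eqP.
by apply/forallP => y; apply/implyP => Hxy; apply/eqP; apply: H.
Qed.

Lemma Kdeg_inl (S : {set {set V}}) a :
  (forall b, [set inl a; inr b] \notin S) ->
  deg (del_edges (Kbip n m) S) (inl a) = m.
Proof.
move=> H; rewrite /deg -[RHS]card_inr; apply: eq_card => -[c|c].
  rewrite !inE /del_edges /=; symmetry; apply/imsetP => [[x _ ]] //.
rewrite !inE /del_edges /= H imset_f //.
Qed.

Lemma pairC (x y : V) : [set x; y] = [set y; x].
Proof. by rewrite setUC. Qed.

Lemma Kdeg_inr (S : {set {set V}}) b :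
  (forall a, [set inl a; inr b] \notin S) ->
  deg (del_edges (Kbip n m) S) (inr b) = n.
Proof.
move=> H; rewrite /deg -[RHS]card_inl; apply: eq_card => -[c|c].
  by rewrite !inE /del_edges /= pairC H imset_f.
rewrite !inE /del_edges /=; symmetry; apply/imsetP => [[x _ ]] //.
Qed.
End K.

Lemma lower (n : nat) (S : {set {set ('I_n + 'I_n)}}) :
  locally_irregular (del_edges (Kbip n n) S) -> (n <= #|S|)%N.
Proof.
move=> LI.
case: (boolP [exists a, [forall b, [set inl a; inr b] \notin S]]) => [/existsP [a /forallP Ha] | Hna].
  case: (boolP [exists b, [forall a, [set inl a; inr b] \notin S]]) => [/existsP [b /forallP Hb] | Hnb].
    exfalso; apply: (LI (inl a) (inr b)).
      by rewrite /del_edges /= Ha.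
    by rewrite Kdeg_inl // Kdeg_inr.
  pose g (b : 'I_n) : {set ('I_n + 'I_n)} :=
    [set inl (odflt b [pick a | [set inl a; inr b] \in S]); inr b].
  have gS b : g b \in S.
    rewrite /g; case: pickP => [a2 //= ->|H] //.
    move/negP: Hnb; case; apply/existsP; exists b; apply/forallP => a2.
    by rewrite H.
  have ginj : injective g.
    move=> b b' E; have: (inr b : 'I_n + 'I_n) \in g b' by rewrite -E /g !inE eqxx orbT.
    by rewrite /g inr_in_pair => /eqP.
  rewrite -{1}(card_ord n) -cardsT -(card_imset _ ginj); apply: subset_leq_card.
  by apply/subsetP => x /imsetP [b _ ->].
pose g (a : 'I_n) : {set ('I_n + 'I_n)} :=
  [set inl a; inr (odflt a [pick b | [set inl a; inr b] \in S])].
have gS a : g a \in S.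
  rewrite /g; case: pickP => [b //= ->|H] //.
  move/negP: Hna; case; apply/existsP; exists a; apply/forallP => b.
  by rewrite H.
have ginj : injective g.
  move=> a a' E; have: (inl a : 'I_n + 'I_n) \in g a' by rewrite -E /g !inE eqxx.
  by rewrite /g inl_in_pair => /eqP.
rewrite -{1}(card_ord n) -cardsT -(card_imset _ ginj); apply: subset_leq_card.
by apply/subsetP => x /imsetP [b _ ->].
Qed.

Lemma bigmin_le (T : eqType) (r : seq T) (P : pred T) (F : T -> nat) x0 i :
  i \in r -> P i -> (\big[minn/x0]_(j <- r | P j) F j <= F i)%N.
Proof.
elim: r => [//|a r IH]; rewrite inE big_cons => /orP [/eqP -> -> | Hi Pi].
  exact: geq_minl.
case: (P a); last exact: IH.
by rewrite geq_min IH ?orbT.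
Qed.

Lemma Ie_le (V : finType) (adj : rel V) (S : {set {set V}}) :
  S \subset edges adj -> locally_irregular (del_edges adj S) -> (Ie adj <= #|S|)%N.
Proof.
move=> sub LI; rewrite /Ie; apply: bigmin_le; first exact: mem_index_enum.
rewrite powersetE sub /=; exact/locP.
Qed.

Lemma Ie_ge (n : nat) :
  (n <= Ie (Kbip n n))%N.
Proof.
rewrite /Ie; apply: (big_ind (fun x => n <= x)%N).
- apply: lower => x y; rewrite /del_edges => /andP [Hxy].
  suff -> : [set x; y] \in edges (Kbip n n) by [].
  by apply/imset2P; exists x y; rewrite ?inE.
- by move=> x y Hx Hy; rewrite leq_min Hx Hy.
- by move=> S /andP [_ /locP]; apply: lower.
Qed.

Lemma Ie_irr (n m : nat) : n <> m -> Ie (Kbip n m) = 0%N.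
Proof.
move=> nm; apply/eqP; rewrite -leqn0 -(@cards0 [the finType of {set ('I_n + 'I_m)}]).
apply: Ie_le; first exact: sub0set.
move=> [a|a] [b|b] H; try by rewrite /del_edges /= in H.
  rewrite Kdeg_inl ?Kdeg_inr; first by move=> E; apply: nm.
    by move=> a'; rewrite !inE.
  by move=> b'; rewrite !inE.
rewrite Kdeg_inl ?Kdeg_inr; first by move=> E; apply: nm.
  by move=> a'; rewrite !inE.
by move=> b'; rewrite !inE.
Qed.

Lemma Ie_up (n : nat) : (1 <= n)%N -> (Ie (Kbip n n) <= n)%N.
Proof.
move=> Hn; pose a0 : 'I_n := Ordinal Hn.
pose f (b : 'I_n) : {set ('I_n + 'I_n)} := [set inl a0; inr b].
pose S0 := f @: [set: 'I_n].
have finj : injective f.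
  move=> b b' E; have: (inr b : 'I_n + 'I_n) \in f b' by rewrite -E /f !inE eqxx orbT.
  by rewrite /f inr_in_pair => /eqP.
have memS0 a b : ([set inl a; inr b] \in S0) = (a == a0).
  apply/imsetP/eqP => [[b' _ E] | ->]; last by exists b.
  have: (inl a : 'I_n + 'I_n) \in f b' by rewrite -E !inE eqxx.
  by rewrite /f inl_in_pair => /eqP.
have cS0 : #|S0| = n by rewrite card_imset // cardsT card_ord.
rewrite -[X in (_ <= X)%N]cS0.
apply: Ie_le.
  apply/subsetP => x /imsetP [b _ ->]; apply/imset2P; exists (inl a0) (inr b); by rewrite ?inE.
have key a b : a != a0 ->
   deg (del_edges (Kbip n n) S0) (inl a) <> deg (del_edges (Kbip n n) S0) (inr b).
  move=> Ha; rewrite Kdeg_inl; last by move=> b'; rewrite memS0.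
  rewrite /deg -[X in X <> _](@card_inl n n) => /esym E.
  have : ([set y | del_edges (Kbip n n) S0 (inr b) y] \proper (@inl 'I_n 'I_n) @: [set: 'I_n]).
    apply/properP; split.
      apply/subsetP => -[c|c]; rewrite inE /del_edges //= => _; exact: imset_f.
    exists (inl a0); first exact: imset_f.
    by rewrite inE /del_edges /= pairC memS0 eqxx.
  by move/proper_card; rewrite E ltnn.
move=> [a|a] [b|b] H; try by rewrite /del_edges /= in H.
  apply: key; apply: contraNneq (H) => ->; by rewrite /del_edges /= memS0 eqxx.
move=> E; apply: (key b a); last by rewrite E.
apply: contraNneq (H) => ->; by rewrite /del_edges /= pairC memS0 eqxx.
Qed.

Theorem theorem5 (n m : nat) : (1 <= n)%N -> (1 <= m)%N ->
  (n <> m -> Ie (Kbip n m) = 0%N) /\ Ie (Kbip n n) = n.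
Proof.
move=> Hn Hm; split; first exact: Ie_irr.
by apply/eqP; rewrite eqn_leq Ie_up // Ie_ge.
Qed.
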